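(* Under the setting and assumptions in the context, let $\ell\neq z$ be two cluster indices with cluster natural frequencies $\omega_\ell,\omega_z$. Suppose $$|\omega_\ell-\omega_z|>2(m-2)\max_{k\neq\ell,z}\Big\{\sum_{r\in\mathcal P_k}a_{ir},\ \sum_{r\in\mathcal P_k}a_{jr}\Big\}$$ for some (equivalently, by (A3), any) $i\in\mathcal P_\ell$, $j\in\mathcal P_z$. Then there is no solution $\theta(\cdot)$ with $\theta(t)\in\mathcal S_{\mathcal P}$ for all $t\ge0$ along which the phases of clusters $\mathcal P_\ell$ and $\mathcal P_z$ coincide for all $t\ge0$. Consequently, if this inequality holds for every pair of clusters, no submanifold of $\mathcal S_{\mathcal P}$ on which two distinct clusters share the same phase is invariant.
   Context: **Graph and dynamics.** Let $\mathcal G=(\mathcal V,\mathcal E)$ be a connected, undirected, weighted graph with $\mathcal V=\{1,\dots,n\}$ and no self-loops. Its adjacency matrix $A=[a_{ij}]$ is symmetric, with $a_{ij}>0$ if $(i,j)\in\mathcal E$ and $0$ otherwise. The Kuramoto dynamics are $$\dot\theta_i=\omega_i+\sum_{j\neq i}a_{ij}\sin(\theta_j-\theta_i),$$ with $\theta_i\in\mathbb S^1$ and $\omega_i>0$. **Partition and manifold.** Let $\mathcal P=\{\mathcal P_1,\dots,\mathcal P_m\}$, $m>1$, be a partition of $\mathcal V$. The cluster synchronization manifold is $$\mathcal S_{\mathcal P}=\{\theta\in\mathbb T^n:\theta_i=\theta_j\ \text{for all } i,j\in\mathcal P_k,\ k=1,\dots,m\}.$$ **Standing assumptions.** - (A2)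 $\omega_i=\omega_j$ whenever $i,j$ lie in the same cluster; $\omega_k$ denotes the common value on $\mathcal P_k$. - (A3) $\sum_{k\in\mathcal P_\ell}(a_{ik}-a_{jk})=0$ for all $i,j\in\mathcal P_z$ and all $z\neq\ell$. *)

(* Defs.v *)
From Stdlib Require Import Reals Lra Lia List ZArith.
Open Scope R_scope.

(* Vertices are 0..n-1; clusters are 0..m-1; c i is the cluster index of vertex i. *)

Definition sum_filter (n : nat) (P : nat -> bool) (f : nat -> R) : R :=
  fold_right Rplus 0 (map f (filter P (seq 0 n))).

Definition clusterSum (n : nat) (a : nat -> nat -> R) (c : nat -> nat)
  (i k : nat) : R :=
  sum_filter n (fun r => Nat.eqb (c r) k) (fun r => a i r).

(* max over k in {0..m-1}, k <> l, k <> z, of max(clusterSum i k, clusterSum j k);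
   the max over an empty index set is taken to be 0 (all entries are >= 0). *)
Definition maxOtherClusterSum (n m : nat) (a : nat -> nat -> R) (c : nat -> nat)
  (l z i j : nat) : R :=
  fold_right Rmax 0
    (map (fun k => Rmax (clusterSum n a c i k) (clusterSum n a c j k))
       (filter (fun k => andb (negb (Nat.eqb k l)) (negb (Nat.eqb k z))) (seq 0 m))).

Inductive reach (n : nat) (a : nat -> nat -> R) : nat -> nat -> Prop :=
| reach_refl : forall i, (i < n)%nat -> reach n a i i
| reach_step : forall i j k, reach n a i j -> (k < n)%nat -> 0 < a j k ->
    reach n a i k.

Definition connected (n : nat) (a : nat -> nat -> R) : Prop :=
  forall i j, (i < n)%nat -> (j < n)%nat -> reach n a i j.

(* Equality of two angles on S^1 (represented by real lifts). *)
Definition angle_eq (x y : R) : Prop := exists k : Z, x - y = 2 * PI * IZR k.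

Definition kuramoto_rhs (n : nat) (a : nat -> nat -> R) (omega : nat -> R)
  (th : nat -> R) (i : nat) : R :=
  omega i + sum_filter n (fun j => negb (Nat.eqb j i))
                         (fun j => a i j * sin (th j - th i)).

Definition is_solution (n : nat) (a : nat -> nat -> R) (omega : nat -> R)
  (theta : R -> nat -> R) : Prop :=
  forall i, (i < n)%nat -> forall t, 0 < t ->
    derivable_pt_lim (fun s => theta s i) t (kuramoto_rhs n a omega (theta t) i).

Definition in_cluster_manifold (n : nat) (c : nat -> nat) (th : nat -> R) : Prop :=
  forall i j, (i < n)%nat -> (j < n)%nat -> c i = c j -> angle_eq (th i) (th j).

Definition clusters_coincide (n : nat) (c : nat -> nat) (l z : nat) (th : nat -> R)
  : Prop :=
  forall i j, (i < n)%nat -> (j < n)%nat -> c i = l -> c j = z ->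
    angle_eq (th i) (th j).

(* Main.v *)
Require Import Defs.
From Stdlib Require Import Reals List ZArith Lra Lia.
Open Scope R_scope.

Definition SL (L : list nat) (P : nat -> bool) (f : nat -> R) : R :=
  fold_right Rplus 0 (map f (filter P L)).

Lemma sf_filter_eq L P Q f : (forall x, In x L -> P x <> Q x -> f x = 0) ->
  SL L P f = SL L Q f.
Proof.
  unfold SL; induction L as [|x L IH]; intros H; simpl; auto.
  assert (IH' : fold_right Rplus 0 (map f (filter P L)) = fold_right Rplus 0 (map f (filter Q L)))
    by (apply IH; intros; apply H; simpl; auto).
  destruct (P x) eqn:EP, (Q x) eqn:EQ; simpl; rewrite ?IH'; auto.
  - rewrite (H x) by (simpl; auto; congruence). ring.
  - rewrite (H x) by (simpl; auto; congruence). ring.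
Qed.

Lemma sf_ext L P f g : (forall x, In x L -> P x = true -> f x = g x) -> SL L P f = SL L P g.
Proof.
  unfold SL; induction L as [|x L IH]; intros H; simpl; auto.
  destruct (P x) eqn:EP; simpl; rewrite IH; auto; try (intros; apply H; simpl; auto).
  rewrite (H x); simpl; auto.
Qed.

Lemma sf_minus L P f g : SL L P (fun r => f r - g r) = SL L P f - SL L P g.
Proof. unfold SL; induction L as [|x L IH]; simpl; [ring|]. destruct (P x); simpl; rewrite ?IH; ring. Qed.

Lemma sf_scal L P s f : SL L P (fun r => s * f r) = s * SL L P f.
Proof. unfold SL; induction L as [|x L IH]; simpl; [ring|]. destruct (P x); simpl; rewrite ?IH; ring. Qed.

Lemma sf_zero L P : SL L P (fun _ => 0) = 0.
Proof. unfold SL; induction L as [|x L IH]; simpl; [ring|]. destruct (P x); simpl; rewrite ?IH; ring. Qed.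

Lemma sf_nonneg L P f : (forall x, In x L -> P x = true -> 0 <= f x) -> 0 <= SL L P f.
Proof.
  unfold SL; induction L as [|x L IH]; intros H; simpl; [lra|].
  destruct (P x) eqn:EP; simpl.
  - assert (0 <= f x) by (apply H; simpl; auto).
    assert (0 <= fold_right Rplus 0 (map f (filter P L))) by (apply IH; intros; apply H; simpl; auto).
    lra.
  - apply IH; intros; apply H; simpl; auto.
Qed.

Lemma sf_union L (c : nat -> nat) m f :
  SL L (fun r => Nat.ltb (c r) m) f + SL L (fun r => Nat.eqb (c r) m) f =
  SL L (fun r => Nat.ltb (c r) (S m)) f.
Proof.
  unfold SL; induction L as [|x L IH]; cbn [filter map fold_right]; [ring|].
  destruct (Nat.lt_trichotomy (c x) m) as [H|[H|H]].
  - assert (E1 : Nat.ltb (c x) m = true) by (apply Nat.ltb_lt; lia).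
    assert (E2 : Nat.eqb (c x) m = false) by (apply Nat.eqb_neq; lia).
    assert (E3 : Nat.ltb (c x) (S m) = true) by (apply Nat.ltb_lt; lia).
    rewrite E1, E2, E3; cbn [map fold_right]; rewrite <- IH; ring.
  - assert (E1 : Nat.ltb (c x) m = false) by (apply Nat.ltb_ge; lia).
    assert (E2 : Nat.eqb (c x) m = true) by (apply Nat.eqb_eq; lia).
    assert (E3 : Nat.ltb (c x) (S m) = true) by (apply Nat.ltb_lt; lia).
    rewrite E1, E2, E3; cbn [map fold_right]; rewrite <- IH; ring.
  - assert (E1 : Nat.ltb (c x) m = false) by (apply Nat.ltb_ge; lia).
    assert (E2 : Nat.eqb (c x) m = false) by (apply Nat.eqb_neq; lia).
    assert (E3 : Nat.ltb (c x) (S m) = false) by (apply Nat.ltb_ge; lia).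
    rewrite E1, E2, E3; rewrite <- IH; ring.
Qed.

Lemma fold_plus_shift a l : fold_right Rplus a l = a + fold_right Rplus 0 l.
Proof. induction l; simpl; [ring|]. rewrite IHl; ring. Qed.

Lemma sf_split L c f : forall m,
  fold_right Rplus 0 (map (fun k => SL L (fun r => Nat.eqb (c r) k) f) (seq 0 m)) =
  SL L (fun r => Nat.ltb (c r) m) f.
Proof.
  induction m.
  - simpl. unfold SL. induction L; simpl; auto.
  - rewrite seq_S, map_app, fold_right_app. simpl.
    rewrite fold_plus_shift, IHm, <- sf_union. ring.
Qed.

Lemma sum_abs_bound (K : list nat) (P : nat -> bool) (T V : nat -> R) :
  (forall k, In k K -> P k = false -> T k = 0) ->
  (forall k, In k K -> P k = true -> Rabs (T k) <= V k) ->
  Rabs (fold_right Rplus 0 (map T K)) <= fold_right Rplus 0 (map V (filter P K)).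
Proof.
  induction K as [|x K IH]; intros H1 H2; simpl.
  - rewrite Rabs_R0; lra.
  - assert (IH' := IH (fun k h => H1 k (or_intror h)) (fun k h => H2 k (or_intror h))).
    destruct (P x) eqn:EP; simpl.
    + assert (Rabs (T x) <= V x) by (apply H2; simpl; auto).
      eapply Rle_trans; [apply Rabs_triang|]. lra.
    + rewrite (H1 x) by (simpl; auto). rewrite Rplus_0_l; auto.
Qed.

Lemma sum_le_len_max (L : list nat) (V : nat -> R) :
  fold_right Rplus 0 (map V L) <= INR (length L) * fold_right Rmax 0 (map V L).
Proof.
  induction L as [|x L IH]; cbn [map fold_right]; [simpl; lra|].
  change (length (x :: L)) with (S (length L)). rewrite S_INR.
  set (M := fold_right Rmax 0 (map V L)) in *.
  assert (V x <= Rmax (V x) M) by apply Rmax_l.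
  assert (M <= Rmax (V x) M) by apply Rmax_r.
  assert (0 <= INR (length L)) by apply pos_INR.
  assert (INR (length L) * M <= INR (length L) * Rmax (V x) M) by (apply Rmult_le_compat_l; auto).
  lra.
Qed.

Lemma max_nonneg (L : list nat) (V : nat -> R) : 0 <= fold_right Rmax 0 (map V L).
Proof. induction L; simpl; [lra|]. eapply Rle_trans; [apply IHL | apply Rmax_r]. Qed.

Lemma ltb_S_case a m : Nat.ltb a (S m) = if Nat.eqb a m then true else Nat.ltb a m.
Proof.
  destruct (Nat.eqb a m) eqn:E.
  - apply Nat.eqb_eq in E; subst; apply Nat.ltb_lt; lia.
  - apply Nat.eqb_neq in E. destruct (Nat.ltb a m) eqn:F.
    + apply Nat.ltb_lt in F; apply Nat.ltb_lt; lia.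
    + apply Nat.ltb_ge in F; apply Nat.ltb_ge; lia.
Qed.

Lemma len_filter2 l z m : l <> z ->
  (length (filter (fun k => andb (negb (Nat.eqb k l)) (negb (Nat.eqb k z))) (seq 0 m))
   + (if Nat.ltb l m then 1 else 0) + (if Nat.ltb z m then 1 else 0) = m)%nat.
Proof.
  intros Hlz. induction m.
  - reflexivity.
  - rewrite seq_S, Nat.add_0_l, filter_app, length_app. cbn [filter].
    rewrite !ltb_S_case. rewrite (Nat.eqb_sym l m), (Nat.eqb_sym z m).
    destruct (Nat.eqb_spec m l), (Nat.eqb_spec m z); try lia;
    cbn [negb andb length];
    destruct (Nat.ltb_spec l m), (Nat.ltb_spec z m); lia.
Qed.

Lemma sin_shift x y : angle_eq x y -> forall u, sin (u - x) = sin (u - y).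
Proof.
  intros [k Hk] u.
  replace (u - y) with ((u - x) + 2 * (PI * IZR k)) by lra.
  rewrite sin_plus, cos_2a_sin.
  assert (Hs : sin (PI * IZR k) = 0) by (apply sin_eq_0_1; exists k; ring).
  assert (Hs2 : sin (2 * (PI * IZR k)) = 0) by (apply sin_eq_0_1; exists (2*k)%Z; rewrite mult_IZR; simpl; ring).
  rewrite Hs, Hs2. ring.
Qed.

Lemma sin_angle0 x y : angle_eq x y -> sin (x - y) = 0.
Proof. intros [k Hk]. apply sin_eq_0_1. exists (2*k)%Z. rewrite Hk, mult_IZR. simpl. ring. Qed.

Lemma IZR_abs_ge1 (K : Z) : K <> 0%Z -> 1 <= Rabs (IZR K).
Proof.
  intros H. destruct (Z_lt_le_dec K 0).
  - assert (IZR K <= -1) by (apply IZR_le; lia). rewrite Rabs_left by lra. lra.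
  - assert (1 <= IZR K) by (apply IZR_le; lia). rewrite Rabs_right by lra. lra.
Qed.

Lemma deriv_zero (f : R -> R) t0 L : 0 < t0 -> derivable_pt_lim f t0 L ->
  (forall t, 0 <= t -> exists k : Z, f t = 2 * PI * IZR k) -> L = 0.
Proof.
  intros Ht0 HD Hk.
  destruct (Req_dec L 0) as [|HL]; auto. exfalso.
  assert (HaL : 0 < Rabs L) by (apply Rabs_pos_lt; auto).
  destruct (HD (Rabs L / 2)) as [d Hd]; [lra|].
  assert (Hd0 := cond_pos d).
  assert (HPI := PI_RGT_0).
  set (h := Rmin (d/2) (Rmin (t0/2) (PI / (2 * Rabs L)))).
  assert (Hh1 : h <= d/2) by apply Rmin_l.
  assert (Hh2 : h <= t0/2) by (eapply Rle_trans; [apply Rmin_r|apply Rmin_l]).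
  assert (Hh3 : h <= PI / (2 * Rabs L)) by (eapply Rle_trans; [apply Rmin_r|apply Rmin_r]).
  assert (Hhp : 0 < h).
  { unfold h. apply Rmin_pos; [lra|]. apply Rmin_pos; [lra|].
    apply Rdiv_lt_0_compat; lra. }
  assert (Hh3' : h * (2 * Rabs L) <= PI).
  { apply (Rmult_le_compat_r (2 * Rabs L)) in Hh3; [|lra].
    unfold Rdiv in Hh3. rewrite Rmult_assoc, Rinv_l in Hh3 by lra. lra. }
  assert (Hq := Hd h ltac:(lra) ltac:(rewrite Rabs_right; lra)).
  destruct (Hk (t0 + h) ltac:(lra)) as [k1 E1].
  destruct (Hk t0 ltac:(lra)) as [k0 E0].
  rewrite E1, E0 in Hq.
  replace (2 * PI * IZR k1 - 2 * PI * IZR k0) with (2 * PI * IZR (k1 - k0)) in Hq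
    by (rewrite minus_IZR; ring).
  set (q := 2 * PI * IZR (k1 - k0) / h) in Hq.
  assert (Hqh : q * h = 2 * PI * IZR (k1 - k0)) by (unfold q; field; lra).
  destruct (Z.eq_dec (k1 - k0) 0) as [E|E].
  - rewrite E in Hqh. assert (q = 0) by nra. rewrite H in Hq.
    rewrite Rminus_0_l, Rabs_Ropp in Hq. lra.
  - assert (H1 := IZR_abs_ge1 _ E).
    assert (Habs : Rabs q * h = 2 * PI * Rabs (IZR (k1 - k0))).
    { rewrite <- (Rabs_right h) by lra. rewrite <- Rabs_mult, Hqh.
      rewrite Rabs_mult, (Rabs_right (2 * PI)) by lra. auto. }
    assert (Hq2 : Rabs q < 3 / 2 * Rabs L).
    { assert (Rabs q <= Rabs (q - L) + Rabs L).
      { replace q with ((q - L) + L) at 1 by ring. apply Rabs_triang. }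
      lra. }
    nra.
Qed.

Lemma sin_2pik v k : sin (v + 2 * (PI * IZR k)) = sin v.
Proof.
  rewrite sin_plus, cos_2a_sin.
  assert (Hs : sin (PI * IZR k) = 0) by (apply sin_eq_0_1; exists k; ring).
  assert (Hs2 : sin (2 * (PI * IZR k)) = 0) by (apply sin_eq_0_1; exists (2*k)%Z; rewrite mult_IZR; simpl; ring).
  rewrite Hs, Hs2. ring.
Qed.

Lemma sin_shift2 x y : angle_eq x y -> forall u, sin (x - u) = sin (y - u).
Proof.
  intros [k Hk] u.
  replace (y - u) with ((x - u) + 2 * (PI * IZR (-k))) by (rewrite opp_IZR; lra).
  rewrite sin_2pik; auto.
Qed.

Lemma angle_sym x y : angle_eq x y -> angle_eq y x.
Proof. intros [k Hk]. exists (-k)%Z. rewrite opp_IZR. lra. Qed.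

Theorem mainTheorem9
  (n m : nat) (a : nat -> nat -> R) (omega : nat -> R) (c : nat -> nat)
  (* graph: symmetric, nonnegative weights, no self-loops, connected *)
  (Hsym : forall i j, (i < n)%nat -> (j < n)%nat -> a i j = a j i)
  (Hnn : forall i j, (i < n)%nat -> (j < n)%nat -> 0 <= a i j)
  (Hloop : forall i, (i < n)%nat -> a i i = 0)
  (Hconn : connected n a)
  (* positive natural frequencies *)
  (Homega : forall i, (i < n)%nat -> 0 < omega i)
  (* partition into m > 1 nonempty clusters P_k = {i < n | c i = k} *)
  (Hm : (1 < m)%nat)
  (Hc : forall i, (i < n)%nat -> (c i < m)%nat)
  (Hne : forall k, (k < m)%nat -> exists i, (i < n)%nat /\ c i = k)
  (* (A2) *)
  (HA2 : forall i j, (i < n)%nat -> (j < n)%nat -> c i = c j -> omega i = omega j)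
  (* (A3) *)
  (HA3 : forall zz ll i j, (i < n)%nat -> (j < n)%nat -> c i = zz -> c j = zz ->
     zz <> ll ->
     sum_filter n (fun r => Nat.eqb (c r) ll) (fun r => a i r - a j r) = 0)
  (l z : nat) (Hl : (l < m)%nat) (Hz : (z < m)%nat) (Hlz : l <> z)
  (Hgap : exists i j, (i < n)%nat /\ (j < n)%nat /\ c i = l /\ c j = z /\
     Rabs (omega i - omega j) >
       2 * INR (m - 2) * maxOtherClusterSum n m a c l z i j) :
  ~ exists theta : R -> nat -> R,
      is_solution n a omega theta /\
      (forall t, 0 <= t -> in_cluster_manifold n c (theta t)) /\
      (forall t, 0 <= t -> clusters_coincide n c l z (theta t)).
Proof.
  intros [theta [Hsol [Hman Hco]]].
  destruct Hgap as [i [j [Hi [Hj [Hci [Hcj Hgt]]]]]].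
  assert (Hang : forall t, 0 <= t -> angle_eq (theta t i) (theta t j))
    by (intros; apply Hco; auto).
  assert (HD : derivable_pt_lim (fun s => theta s i - theta s j) 1
     (kuramoto_rhs n a omega (theta 1) i - kuramoto_rhs n a omega (theta 1) j))
    by exact (derivable_pt_lim_minus _ _ _ _ _ (Hsol i Hi 1 Rlt_0_1) (Hsol j Hj 1 Rlt_0_1)).
  apply deriv_zero in HD; [| lra |
    intros t Ht; destruct (Hang t Ht) as [k Hk]; exists k; lra].
  set (th := theta 1) in *.
  set (g := fun r => sin (th r - th i)).
  assert (Hinn : forall x, In x (seq 0 n) -> (x < n)%nat)
    by (intros x Hx; apply in_seq in Hx; lia).
  assert (Ri : sum_filter n (fun r => negb (Nat.eqb r i)) (fun r => a i r * sin (th r - th i))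
     = SL (seq 0 n) (fun _ => true) (fun r => a i r * g r)).
  { change (SL (seq 0 n) (fun r => negb (Nat.eqb r i)) (fun r => a i r * sin (th r - th i))
     = SL (seq 0 n) (fun _ => true) (fun r => a i r * g r)).
    apply sf_filter_eq. intros x Hx HP. revert HP.
    destruct (Nat.eqb_spec x i) as [->|]; simpl; intros HP;
      [rewrite Hloop by auto; ring | congruence]. }
  assert (Rj : sum_filter n (fun r => negb (Nat.eqb r j)) (fun r => a j r * sin (th r - th j))
     = SL (seq 0 n) (fun _ => true) (fun r => a j r * g r)).
  { change (SL (seq 0 n) (fun r => negb (Nat.eqb r j)) (fun r => a j r * sin (th r - th j))
     = SL (seq 0 n) (fun _ => true) (fun r => a j r * g r)).
    rewrite (sf_filter_eq _ _ (fun _ => true)).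
    2:{ intros x Hx HP. revert HP.
        destruct (Nat.eqb_spec x j) as [->|]; simpl; intros HP;
          [rewrite Hloop by auto; ring | congruence]. }
    apply sf_ext. intros x Hx _. unfold g.
    rewrite (sin_shift (th i) (th j) (Hang 1 ltac:(lra))). reflexivity. }
  unfold kuramoto_rhs in HD. fold th in HD. rewrite Ri, Rj in HD.
  set (hh := fun r => (a i r - a j r) * g r).
  assert (Hh : SL (seq 0 n) (fun _ => true) hh =
     SL (seq 0 n) (fun _ => true) (fun r => a i r * g r) - SL (seq 0 n) (fun _ => true) (fun r => a j r * g r)).
  { rewrite <- sf_minus. apply sf_ext. intros; unfold hh; ring. }
  assert (Hw : omega i - omega j = - SL (seq 0 n) (fun _ => true) hh) by lra.
  rewrite (sf_filter_eq _ _ (fun r => Nat.ltb (c r) m)) in Hw.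
  2:{ intros x Hx HP. exfalso. apply HP. symmetry. apply Nat.ltb_lt. apply Hc; auto. }
  rewrite <- sf_split in Hw.
  set (Pk := fun k => andb (negb (Nat.eqb k l)) (negb (Nat.eqb k z))).
  set (V := fun k => Rmax (clusterSum n a c i k) (clusterSum n a c j k)).
  assert (Hb : Rabs (fold_right Rplus 0 (map (fun k => SL (seq 0 n) (fun r => Nat.eqb (c r) k) hh) (seq 0 m)))
     <= fold_right Rplus 0 (map V (filter Pk (seq 0 m)))).
  { apply sum_abs_bound.
    - intros k Hk HP. unfold Pk in HP.
      rewrite <- (sf_zero (seq 0 n) (fun r => Nat.eqb (c r) k)).
      apply sf_ext. intros r Hr Hcr. apply Nat.eqb_eq in Hcr.
      assert (Hrn := Hinn r Hr). unfold hh, g.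
      destruct (Nat.eqb_spec k l) as [->|Hkl].
      + rewrite sin_angle0; [ring|]. apply (Hman 1 ltac:(lra)); auto; congruence.
      + destruct (Nat.eqb_spec k z) as [->|Hkz]; [|simpl in HP; discriminate].
        rewrite sin_angle0; [ring|]. apply angle_sym. apply (Hco 1 ltac:(lra)); auto.
    - intros k Hk _. apply in_seq in Hk.
      destruct (Hne k ltac:(lia)) as [rk [Hrk Hcrk]].
      set (s := sin (th rk - th i)).
      rewrite (sf_ext _ _ hh (fun r => s * (a i r - a j r))).
      2:{ intros r Hr Hcr. apply Nat.eqb_eq in Hcr. unfold hh, g, s.
          rewrite (sin_shift2 (th r) (th rk)); [ring|]. apply (Hman 1 ltac:(lra)); auto; congruence. }
      rewrite sf_scal, sf_minus, Rabs_mult.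
      change (SL (seq 0 n) (fun r => Nat.eqb (c r) k) (fun r => a i r)) with (clusterSum n a c i k).
      change (SL (seq 0 n) (fun r => Nat.eqb (c r) k) (fun r => a j r)) with (clusterSum n a c j k).
      assert (Si : 0 <= clusterSum n a c i k)
        by (apply sf_nonneg; intros; apply Hnn; auto).
      assert (Sj : 0 <= clusterSum n a c j k)
        by (apply sf_nonneg; intros; apply Hnn; auto).
      assert (Hs1 : Rabs s <= 1) by (apply Rabs_le; apply SIN_bound).
      assert (Hd : Rabs (clusterSum n a c i k - clusterSum n a c j k) <= V k).
      { unfold V, Rmax. destruct (Rle_dec _ _); apply Rabs_le; lra. }
      assert (0 <= Rabs s) by apply Rabs_pos.
      assert (0 <= Rabs (clusterSum n a c i k - clusterSum n a c j k)) by apply Rabs_pos.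
      eapply Rle_trans; [apply Rmult_le_compat_r; [apply Rabs_pos| exact Hs1]|]. rewrite Rmult_1_l. exact Hd. }
  assert (Hlen := len_filter2 l z m Hlz).
  assert (El : Nat.ltb l m = true) by (apply Nat.ltb_lt; auto).
  assert (Ez : Nat.ltb z m = true) by (apply Nat.ltb_lt; auto).
  rewrite El, Ez in Hlen.
  assert (HL : length (filter Pk (seq 0 m)) = (m - 2)%nat) by (unfold Pk; lia).
  assert (Hm2 := sum_le_len_max (filter Pk (seq 0 m)) V).
  rewrite HL in Hm2.
  assert (HM := max_nonneg (filter Pk (seq 0 m)) V).
  assert (HI := pos_INR (m - 2)).
  change (maxOtherClusterSum n m a c l z i j) with (fold_right Rmax 0 (map V (filter Pk (seq 0 m)))) in Hgt.
  rewrite Hw, Rabs_Ropp in Hgt.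
  nra.
Qed.
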